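(* For integers $n>4$ and $k\ge1$, $F_{4,k}(n)=0$ if and only if $(k,n)\in\{(3,8),(5,8),(6,12),(7,8)\}$. In particular $F_{4,k}$ has no positive integer root for $k>7$.
   Context: For an integer $j\ge0$, $\binom{x}{j}=x(x-1)\cdots(x-j+1)/j!$ as a polynomial in $x$, and $\binom{x}{j}=0$ for $j<0$. For integers $s\ge1$, $k\ge1$, the Moser polynomial is $F_{s,k}(x)=\sum_{p=1}^{s}(-1)^{p-1}p^{k-1}\binom{x}{s-p}$. *)

(* Defs.v *)
From HB Require Import structures.
From mathcomp Require Import all_boot all_order all_algebra.
Set Implicit Arguments. Unset Strict Implicit. Unset Printing Implicit Defensive.
Import Order.TTheory GRing.Theory Num.Theory.
Local Open Scope ring_scope.

Definition binom_poly (R : fieldType) (j : nat) : {poly R} :=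
  ((j`!)%:R)^-1 *: \prod_(i < j) ('X - (i%:R)%:P).

(* Moser polynomial F_{s,k}(x) = sum_{p=1}^{s} (-1)^(p-1) p^(k-1) binom(x, s-p).
   Since p <= s, the index s - p (truncated nat subtraction) is the true value >= 0. *)
Definition moser (R : fieldType) (s k : nat) : {poly R} :=
  \sum_(1 <= p < s.+1) (((-1) ^+ (p - 1) * (p%:R) ^+ (k - 1)) *: binom_poly R (s - p)).

(* Main.v *)
From Stdlib Require Import ZArith Lia.
Require Import Defs.
From HB Require Import structures.
From mathcomp Require Import all_boot all_order all_algebra.
From mathcomp Require Import zify ring lra.
Import Order.TTheory GRing.Theory Num.Theory.
Definition L (N j : nat) : nat := N * (N - 1) * (N - 2) + 6 * 3 ^ j * N.
Definition R (N j : nat) : nat := 3 * 2 ^ j * N * (N - 1) + 6 * 4 ^ j.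

Lemma pow4_big j : 12 <= j -> 2304 + 24 * 3 ^ j < 4 ^ j.
Proof.
elim: j => [//|j IH]; rewrite leq_eqVlt => /orP [/eqP <-|]; first by lia.
move=> /IH; rewrite !expnS; lia.
Qed.

Lemma small_N N j : N <= 24 -> 12 <= j -> L N j < R N j.
Proof.
move=> hN /pow4_big hj; rewrite /L /R.
have h1 : N * (N - 1) * (N - 2) <= 24 * 24 * 24.
  have : N * (N - 1) <= 24 * 24 by apply: leq_mul; lia.
  move=> h; have : N * (N - 1) * (N - 2) <= (24 * 24) * 24 by apply: leq_mul; lia.
  done.
have h2 : 6 * 3 ^ j * N <= 144 * 3 ^ j by rewrite [6 * _]mulnC -mulnA [144 * _]mulnC leq_mul2l; lia.
move: h1 h2 hj; move: (N * (N - 1) * (N - 2)) (6 * 3 ^ j * N) (3 * 2 ^ j * N * (N - 1)) (3 ^ j) (4 ^ j) => *; lia.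
Qed.

Lemma big_N N j : 16 <= N -> 4 * 2 ^ j <= N -> R N j < L N j.
Proof.
move=> h16 h4; rewrite /L /R.
set a := 2 ^ j in h4 *.
have e4 : 4 ^ j = a * a by rewrite /a -expnMn.
rewrite e4; clearbody a.
have h1 : 3 * a + 1 <= N - 2 by lia.
have h2 : N * (N - 1) * (3 * a + 1) <= N * (N - 1) * (N - 2) by apply: leq_mul.
have h3 : 6 * (a * a) < N * (N - 1).
  have h5 : 16 * (a * a) <= N * N by have := leq_mul h4 h4; rewrite mulnACA.
  have h6 : 16 * N <= N * N by rewrite leq_mul2r h16 orbT.
  have h7 : N * (N - 1) = N * N - N by rewrite mulnBr muln1.
  rewrite h7; move: h5 h6; move: (N * N) (a * a) => *; lia.
nia.
Qed.

Lemma pow3_mod8 j : exists r, 3 ^ j = 8 * r + 1 \/ 3 ^ j = 8 * r + 3.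
Proof.
elim: j => [|j [r [e|e]]]; first by exists 0; left.
- exists (3 * r); right; rewrite expnS e; lia.
- exists (3 * r + 1); left; rewrite expnS e; lia.
Qed.

Lemma odd_dec N : 0 < N -> exists i m, odd m /\ N = 2 ^ i * m.
Proof.
elim: N {-2}N (leqnn N) => [|n IH] N hN hN0; first by lia.
case o: (odd N); first by exists 0, N; rewrite expn0 mul1n.
have hN2 : N = 2 * N./2 by rewrite -[N in LHS]odd_double_half o add0n -mul2n.
have [||i [m [om em]]] := IH N./2; try lia.
by exists i.+1, m; split => //; rewrite expnS -mulnA -em.
Qed.

Lemma no_big N j : 25 <= N -> L N j <> R N j.
Proof.
move=> hN E.
set X := (N - 1) * (N - 2) + 6 * 3 ^ j.
set Q := N * (N - 1) + 2 * 2 ^ j.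
have e4 : 4 ^ j = 2 ^ j * 2 ^ j by rewrite -expnMn.
have eL : L N j = N * X by rewrite /L /X; nia.
have eR : R N j = 3 * 2 ^ j * Q by rewrite /R /Q e4; nia.
have dN : N %| 3 * 2 ^ (2 * j + 1).
  have -> : 3 * 2 ^ (2 * j + 1) = 6 * 4 ^ j by rewrite (_ : 2 * j + 1 = (j + j).+1); [rewrite expnS expnD -e4; lia | lia].
  have h : N %| R N j by rewrite -E eL dvdn_mulr.
  have h2 : N %| 3 * 2 ^ j * N * (N - 1) by rewrite dvdn_mulr // dvdn_mull.
  by rewrite -(dvdn_addr _ h2).
have [i [m [om em]]] := @odd_dec N ltac:(lia).
have m3 : m <= 3.
  have : m %| 3 * 2 ^ (2 * j + 1) by apply: dvdn_trans dN; rewrite em dvdn_mull.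
  rewrite Gauss_dvdl; last by apply: coprimeXr; rewrite coprimen2.
  by move/dvdn_leq; apply.
have i4 : 4 <= i.
  case: (leqP 4 i) => // hi.
  have : 2 ^ i <= 2 ^ 3 by rewrite leq_exp2l //; lia.
  rewrite (_ : 2 ^ 3 = 8) // => h8.
  have : N <= 8 * 3 by rewrite em; apply: leq_mul.
  lia.
have d16N : 16 %| N by rewrite em dvdn_mulr // (_ : 16 = 2 ^ 4) // dvdn_exp2l.
have nX : ~~ (16 %| X).
  move: d16N => /dvdnP [t ht].
  have [r hr] := pow3_mod8 j.
  have ht1 : 1 <= t by lia.
  have hq : (N - 1) * (N - 2) = 16 * (16 * (t - 1) * (t - 1) + 29 * (t - 1) + 13) + 2.
    have -> : N - 1 = 16 * (t - 1) + 15 by lia.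
    have -> : N - 2 = 16 * (t - 1) + 14 by lia.
    move: (t - 1) => u; lia.
  apply/negP => /dvdnP [c hc].
  move: hc; rewrite /X hq; case: hr => ->; lia.
have pos2 : forall e, 0 < 2 ^ e by move=> e; rewrite expn_gt0.
have cop : forall e, coprime (2 ^ e) m by move=> e; apply: coprimeXl; rewrite coprime2n.
have E2 : 2 ^ i * (m * X) = 3 * 2 ^ j * Q by rewrite mulnA -em -eL -eR.
case: (leqP i j) => hij.
- have : 2 ^ i %| Q.
    rewrite /Q dvdn_add //; first by rewrite em -!mulnA dvdn_mulr.
    by apply: dvdn_mull; apply: dvdn_exp2l.
  move/dvdnP => [q hq].
  move: E2; rewrite hq (mulnC q) !mulnA => /eqP.
  rewrite -[3 * 2 ^ j * 2 ^ i]mulnC -!mulnA eqn_pmul2l // => /eqP E3.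
  have : 2 ^ j %| m * X by rewrite E3 mulnCA dvdn_mulr.
  rewrite Gauss_dvdr // => h.
  apply: (negP nX); apply: dvdn_trans h; rewrite (_ : 16 = 2 ^ 4) // dvdn_exp2l //; lia.
case: (leqP i j.+1) => hij2.
- have ei : i = j.+1 by lia.
  have : 2 ^ (j.+2) %| Q.
    move: d16N => /dvdnP [t ht].
    have [m' hm'] : exists m', m = 2 * m' + 1.
      by exists m./2; rewrite -[m in LHS]odd_double_half om mul2n addnC.
    have ht1 : 1 <= t by lia.
    have hQ : Q = 2 ^ j.+2 * (m' * (16 * (t - 1) + 15) + 8 * (t - 1) + 8).
      rewrite /Q; rewrite ei in em.
      have -> : N - 1 = 16 * (t - 1) + 15 by lia.
      rewrite {1}em hm' !expnS.
      move: (2 ^ j) (t - 1) => A s. ring.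
    by rewrite hQ dvdn_mulr.
  move/dvdnP => [q hq].
  move: E2; rewrite hq ei !expnS => /eqP.
  have -> : 3 * 2 ^ j * (q * (2 * (2 * 2 ^ j))) = (2 * 2 ^ j) * (3 * 2 * 2 ^ j * q) by ring.
  rewrite eqn_pmul2l ?muln_gt0 ?pos2 // => /eqP E3.
  have : 2 ^ j.+1 %| m * X by rewrite E3 (_ : 3 * 2 * 2 ^ j * q = 2 ^ j.+1 * (3 * q)) ?dvdn_mulr // expnS; ring.
  rewrite Gauss_dvdr // => h.
  apply: (negP nX); apply: dvdn_trans h; rewrite (_ : 16 = 2 ^ 4) // dvdn_exp2l //; lia.
- have : 4 * 2 ^ j <= N.
    rewrite em; apply: leq_trans (leq_pmulr _ _); last by move: om; case: (m).
    rewrite (_ : 4 * 2 ^ j = 2 ^ j.+2); last by rewrite !expnS mulnA.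
    by rewrite leq_exp2l.
  move=> h4; have h16 : 16 <= N by lia.
  by have := big_N N j h16 h4; rewrite E ltnn.
Qed.

Lemma Zofnat_expn x y : Z.of_nat (x ^ y) = Z.pow (Z.of_nat x) (Z.of_nat y).
Proof.
elim: y => [|y IH]; first by [].
by rewrite expnS Nat2Z.inj_mul IH Nat2Z.inj_succ Z.pow_succ_r; lia.
Qed.

Local Open Scope Z_scope.
Definition zL (N j : nat) : Z := (Z.of_nat N * Z.of_nat (N - 1) * Z.of_nat (N - 2) + 6 * Z.pow 3 (Z.of_nat j) * Z.of_nat N)%Z.
Definition zR (N j : nat) : Z := (3 * Z.pow 2 (Z.of_nat j) * Z.of_nat N * Z.of_nat (N - 1) + 6 * Z.pow 4 (Z.of_nat j))%Z.

Local Close Scope Z_scope.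
Lemma LR_Z N j : (L N j = R N j) <-> zL N j = zR N j.
Proof.
rewrite /L /R /zL /zR.
split => H.
- have := f_equal Z.of_nat H. zify. lia.
- apply: Nat2Z.inj. zify. lia.
Qed.

Definition sols : seq (nat * nat) :=
  [:: (1,1); (1,2); (1,3); (2,2); (2,3); (2,4); (3,3); (3,4); (3,8); (4,4); (5,8); (6,12); (7,8)].

Lemma fincheck : all (fun N => all (fun j => Z.eqb (zL N j) (zR N j) == ((j.+1, N) \in sols)) (iota 0 12)) (iota 1 24).
Proof. vm_compute. reflexivity. Qed.


Lemma key N j : 1 <= N -> L N j = R N j <-> (j.+1, N) \in sols.
Proof.
move=> hN; split => [E|].
- case: (leqP 25 N) => h25; first by case: (no_big N j h25 E).
  case: (leqP 12 j) => hj.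
    by have := small_N N j ltac:(lia) hj; rewrite E ltnn.
  move: fincheck => /allP /(_ N); rewrite mem_iota => /(_ ltac:(lia)).
  move=> /allP /(_ j); rewrite mem_iota => /(_ ltac:(lia)) /eqP <-.
  by apply/Z.eqb_eq; apply/LR_Z.
- move=> hs.
  have hb : (N <= 24) && (j < 12).
    by move: hs; rewrite /sols !inE !xpair_eqE; lia.
  move/andP: hb => [hN24 hj].
  move: fincheck => /allP /(_ N); rewrite mem_iota => /(_ ltac:(lia)).
  move=> /allP /(_ j); rewrite mem_iota => /(_ ltac:(lia)); rewrite hs => /eqP h.
  by apply/LR_Z; apply/Z.eqb_eq.
Qed.

Local Open Scope ring_scope.
Lemma binomE (j : nat) (x : rat) : (binom_poly rat j).[x] = (j`!%:R)^-1 * \prod_(i < j) (x - i%:R).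
Proof. by rewrite /binom_poly hornerZ horner_prod; under eq_bigr do rewrite hornerXsubC. Qed.

Lemma moser4E k (x : rat) : (moser rat 4 k).[x] * 6 =
  x*(x-1)*(x-2) - 3*2^+(k-1)*x*(x-1) + 6*3^+(k-1)*x - 6*4^+(k-1).
Proof.
rewrite /moser horner_sum.
rewrite big_nat_recl // big_nat_recl // big_nat_recl // big_nat_recl // big_geq //.
rewrite !hornerZ !horner_prod /= !big_ord_recr !big_ord0 /=.
rewrite !hornerXsubC expr1n !mulr1 !expr0 !expr1 /=.
have -> : (3`!)%:R = 6 :> rat by [].
have -> : (2`!)%:R = 2 :> rat by [].
have -> : (1`!)%:R = 1 :> rat by [].
rewrite ?expr2 ?expr1 ?invr1 ?mul1r ?mulr1.
rewrite !subSS !subn0.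
field; done.
Qed.

Lemma value_eq0 N j : (1 <= N)%N ->
  ((moser rat 4 j.+1).[N%:R] = 0) <-> L N j = R N j.
Proof.
move=> hN.
have E : (moser rat 4 j.+1).[N%:R] * 6 = (L N j)%:R - (R N j)%:R.
  rewrite moser4E subn1 /= /L /R.
  case: N hN => [//|[|N']] _.
    have -> : (1 - 2)%N = 0%N by [].
    rewrite subnn ?muln0 ?mul0n ?add0n ?addn0 ?muln1 ?natrD ?natrM ?natrX.
    ring.
  have -> : (N'.+2 - 1)%N = N'.+1 by lia.
  have -> : (N'.+2 - 2)%N = N' by lia.
  rewrite -[N'.+2]addn2 -[N'.+1]addn1 !natrD !natrM !natrX ?natrD.
  move: (N'%:R : rat) (2 ^+ j : rat) (3 ^+ j : rat) (4 ^+ j : rat) => y a b c; ring.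
split => [h|h].
- by apply/eqP; rewrite -(eqr_nat rat) -subr_eq0 -E h mul0r.
- have : (moser rat 4 j.+1).[N%:R] * 6 = 0 by rewrite E h subrr.
  by move/eqP; rewrite mulf_eq0 orbF => /eqP.
Qed.

Lemma t1 (N : nat) (j : nat) : (4 < Posz N) -> (moser rat 4 j.+1).[(Posz N)%:~R] = 0 <->
      (j.+1, Posz N) \in [:: (3%N, 8%:Z); (5%N, 8%:Z); (6%N, 12%:Z); (7%N, 8%:Z)].
Proof.
move=> hn.
  have hN : (1 <= N)%N by lia.
  rewrite value_eq0 // key //.
  rewrite /sols !inE !xpair_eqE.
  split => H; repeat (case/orP: H => H); case/andP: H => /eqP [Hj] /eqP.
  all: first [ move=> [Hn] | move=> Hn ]; subst N j => //.
Qed.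

Lemma t2 (N : nat) (j : nat) : 0 < Posz N -> (7 < j.+1)%N -> (moser rat 4 j.+1).[(Posz N)%:~R] != 0.
Proof.
move=> hn hk.
have hN : (1 <= N)%N by lia.
apply/eqP; rewrite value_eq0 // key // /sols !inE !xpair_eqE => H.
repeat (case/orP: H => H); case/andP: H => /eqP [Hj] _; subst j => //.
Qed.

Theorem mainTheorem14 :
  (forall (n : int) (k : nat), 4 < n -> (1 <= k)%N ->
     ((moser rat 4 k).[n%:~R] = 0 <->
      (k, n) \in [:: (3%N, 8%:Z); (5%N, 8%:Z); (6%N, 12%:Z); (7%N, 8%:Z)])) /\
  (forall (n : int) (k : nat), 0 < n -> (7 < k)%N -> (moser rat 4 k).[n%:~R] != 0).
Proof.
split.
- move=> [N|N] [|j] // hn _; exact: t1.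
- move=> [N|N] [|j] // hn hk; exact: t2.
Qed.
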